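(* Let $\Omega=(-X,X)\times(-Y,Y)$, let $N_x,N_y$ be even positive integers, $h_x=2X/N_x$, $h_y=2Y/N_y$. Suppose $\mathsf{J}\in C^1_{\mathrm{per}}(\Omega)$ and define its grid restriction by $J_{ij}:=\mathsf{J}(x_i,y_j)$, extended periodically in $(i,j)$. Then there is a constant $C>0$, depending on $\mathsf{J}$ (and $\Omega$) but independent of $h_x$ and $h_y$, such that for any periodic grid functions $f,g\in\mathcal{M}_h$ and any $\alpha>0$, $$|\langle J \circledast f, \Delta_N g\rangle|\le \alpha\|f\|_2^2+\frac{C}{\alpha}\|\nabla_N g\|_2^2 .$$
   Context: Grid: $x_i=-X+ih_x$, $y_j=-Y+jh_y$, index set $S_h=\{(i,j):1\le i\le N_x,1\le j\le N_y\}$, $\widehat S_h=\{(k,l)\in\mathbb{Z}^2: -N_x/2+1\le k\le N_x/2,\ -N_y/2+1\le l\le N_y/2\}$. $\mathcal{M}_h$ is the space of real grid functions $f_{ij}$ that are $N_x$-periodic in $i$ and $N_y$-periodic in $j$. Discrete inner product $\langle f,g\rangle=h_xh_y\sum_{(i,j)\in S_h}f_{ij}g_{ij}$ (for vector grid functions, sum of componentwise products), $\|f\|_2=\sqrt{\langle f,f\rangle}$. Discrete Fourier transform $\hat f_{kl}=\sum_{(i,j)\in S_h}f_{ij}e^{-\mathrm{i}k\pi x_i/X}e^{-\mathrm{i}l\pi y_j/Y}$, $(k,l)\in\widehat S_h$, with inverse $f_{ij}=\frac{1}{N_xN_y}\sum_{(k,l)\in\widehat S_h}\hat f_{kl}e^{\mathrm{i}k\pi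 x_i/X}e^{\mathrm{i}l\pi y_j/Y}$. The spectral derivatives $D_x,D_y$ act by multiplying $\hat f_{kl}$ by $\mathrm{i}k\pi/X$ and $\mathrm{i}l\pi/Y$ respectively; $\nabla_N f=(D_xf,D_yf)^T$, $\Delta_N f=D_x^2f+D_y^2f$. Discrete (periodic) convolution: $(J\circledast f)_{ij}=h_xh_y\sum_{(m,n)\in S_h}J_{i-m,j-n}f_{mn}$. *)

(* Defs.v *)
From Stdlib Require Import Reals ZArith Lra.
From Coquelicot Require Import Coquelicot.
Open Scope R_scope.

Definition cis (t : R) : C := (cos t, sin t).

Fixpoint sumZ (n : nat) (F : Z -> C) : C :=
  match n with
  | O => RtoC 0
  | S m => Cplus (sumZ m F) (F (Z.of_nat (S m)))
  end.

Fixpoint sumZR (n : nat) (F : Z -> R) : R :=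
  match n with
  | O => 0
  | S m => sumZR m F + F (Z.of_nat (S m))
  end.

Definition hstep (L : R) (N : nat) : R := 2 * L / INR N.
Definition node (L : R) (N : nat) (i : Z) : R := - L + IZR i * hstep L N.

Definition gridR := Z -> Z -> R.
Definition gridC := Z -> Z -> C.

Definition periodic_grid (Nx Ny : nat) (f : gridR) : Prop :=
  forall i j, f (i + Z.of_nat Nx)%Z j = f i j /\ f i (j + Z.of_nat Ny)%Z = f i j.

Definition toC (f : gridR) : gridC := fun i j => RtoC (f i j).

(* sum over S_h = {1..Nx} x {1..Ny} *)
Definition sumS (Nx Ny : nat) (F : Z -> Z -> C) : C :=
  sumZ Nx (fun i => sumZ Ny (fun j => F i j)).
Definition sumSR (Nx Ny : nat) (F : Z -> Z -> R) : R :=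
  sumZR Nx (fun i => sumZR Ny (fun j => F i j)).

(* sum over hat S_h = {-Nx/2+1..Nx/2} x {-Ny/2+1..Ny/2} *)
Definition sumShat (Nx Ny : nat) (F : Z -> Z -> C) : C :=
  sumZ Nx (fun a => sumZ Ny (fun b =>
    F (a - Z.of_nat (Nat.div2 Nx))%Z (b - Z.of_nat (Nat.div2 Ny))%Z)).

Definition dft (X Y : R) (Nx Ny : nat) (u : gridC) (k l : Z) : C :=
  sumS Nx Ny (fun i j =>
    Cmult (u i j)
      (Cmult (cis (- (IZR k * PI * node X Nx i / X)))
             (cis (- (IZR l * PI * node Y Ny j / Y))))).

Definition spec_op (X Y : R) (Nx Ny : nat) (m : Z -> Z -> C) (u : gridC) : gridC :=
  fun i j =>
    Cmult (RtoC (/ (INR Nx * INR Ny)))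
      (sumShat Nx Ny (fun k l =>
         Cmult (Cmult (m k l) (dft X Y Nx Ny u k l))
           (Cmult (cis (IZR k * PI * node X Nx i / X))
                  (cis (IZR l * PI * node Y Ny j / Y))))).

Definition DxN (X Y : R) (Nx Ny : nat) (u : gridC) : gridC :=
  spec_op X Y Nx Ny (fun k _ => (0, IZR k * PI / X)) u.
Definition DyN (X Y : R) (Nx Ny : nat) (u : gridC) : gridC :=
  spec_op X Y Nx Ny (fun _ l => (0, IZR l * PI / Y)) u.

Definition LapN (X Y : R) (Nx Ny : nat) (u : gridC) : gridC :=
  fun i j => Cplus (DxN X Y Nx Ny (DxN X Y Nx Ny u) i j)
                   (DyN X Y Nx Ny (DyN X Y Nx Ny u) i j).

(* discrete inner product (Hermitian; coincides with the real one on real grid functions) *)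
Definition ipN (X Y : R) (Nx Ny : nat) (u v : gridC) : C :=
  Cmult (RtoC (hstep X Nx * hstep Y Ny))
        (sumS Nx Ny (fun i j => Cmult (u i j) (Cconj (v i j)))).

Definition nrm2sq (X Y : R) (Nx Ny : nat) (u : gridC) : R :=
  hstep X Nx * hstep Y Ny * sumSR Nx Ny (fun i j => Cmod (u i j) ^ 2).

Definition grad_nrm2sq (X Y : R) (Nx Ny : nat) (g : gridR) : R :=
  nrm2sq X Y Nx Ny (DxN X Y Nx Ny (toC g)) + nrm2sq X Y Nx Ny (DyN X Y Nx Ny (toC g)).

Definition grid_restr (X Y : R) (Nx Ny : nat) (J : R -> R -> R) : gridR :=
  fun i j => J (node X Nx i) (node Y Ny j).

Definition convN (X Y : R) (Nx Ny : nat) (Jg f : gridR) : gridR :=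
  fun i j => hstep X Nx * hstep Y Ny *
    sumSR Nx Ny (fun m n => Jg (i - m)%Z (j - n)%Z * f m n).

Definition C1per (X Y : R) (J : R -> R -> R) : Prop :=
  (forall x y, J (x + 2 * X) y = J x y /\ J x (y + 2 * Y) = J x y) /\
  exists Jx Jy : R -> R -> R,
    (forall x y, is_derive (fun t => J t y) x (Jx x y)) /\
    (forall x y, is_derive (fun t => J x t) y (Jy x y)) /\
    (forall p : R * R, continuous (fun q : R * R => Jx (fst q) (snd q)) p) /\
    (forall p : R * R, continuous (fun q : R * R => Jy (fst q) (snd q)) p) /\
    (forall p : R * R, continuous (fun q : R * R => J (fst q) (snd q)) p).

(* Main.v *)
Require Import Defs.
From Stdlib Require Import Reals ZArith Lra Lia Psatz List ClassicalEpsilon Classical.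
From Coquelicot Require Import Coquelicot.
Open Scope R_scope.

Lemma sumZ_ext n F G : (forall t, (1 <= t <= Z.of_nat n)%Z -> F t = G t) -> sumZ n F = sumZ n G.
Proof. induction n; intros H; simpl; auto. rewrite IHn, H; auto; try lia. intros; apply H; lia. Qed.

Lemma sumZR_ext n F G : (forall t, (1 <= t <= Z.of_nat n)%Z -> F t = G t) -> sumZR n F = sumZR n G.
Proof. induction n; intros H; simpl; auto. rewrite IHn, H; auto; try lia. intros; apply H; lia. Qed.

Lemma sumZ_plus n F G : sumZ n (fun t => Cplus (F t) (G t)) = Cplus (sumZ n F) (sumZ n G).
Proof. induction n; simpl. ring. rewrite IHn. ring. Qed.

Lemma sumZ_scal n c F : sumZ n (fun t => Cmult c (F t)) = Cmult c (sumZ n F).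
Proof. induction n; simpl. ring. rewrite IHn. ring. Qed.

Lemma sumZ_scal_r n c F : sumZ n (fun t => Cmult (F t) c) = Cmult (sumZ n F) c.
Proof. induction n; simpl. ring. rewrite IHn. ring. Qed.

Lemma sumZ_zero n : sumZ n (fun _ => RtoC 0) = RtoC 0.
Proof. induction n; simpl. auto. rewrite IHn. ring. Qed.

Lemma sumZ_conj n F : Cconj (sumZ n F) = sumZ n (fun t => Cconj (F t)).
Proof. induction n; simpl. unfold Cconj, RtoC; simpl; f_equal; ring.
 rewrite Cplus_conj, IHn. auto. Qed.

Lemma sumZ_swap n m (F : Z -> Z -> C) :
  sumZ n (fun i => sumZ m (fun j => F i j)) = sumZ m (fun j => sumZ n (fun i => F i j)).
Proof. induction n; simpl. rewrite sumZ_zero; auto.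
 rewrite IHn, <- sumZ_plus. auto. Qed.

Lemma sumZR_plus n F G : sumZR n (fun t => F t + G t) = sumZR n F + sumZR n G.
Proof. induction n; simpl. ring. rewrite IHn. ring. Qed.

Lemma sumZR_scal n c F : sumZR n (fun t => c * F t) = c * sumZR n F.
Proof. induction n; simpl. ring. rewrite IHn. ring. Qed.

Lemma sumZR_le n F G : (forall t, (1 <= t <= Z.of_nat n)%Z -> F t <= G t) -> sumZR n F <= sumZR n G.
Proof. induction n; intros H; simpl. lra. apply Rplus_le_compat. apply IHn; intros; apply H; lia. apply H; lia. Qed.

Lemma sumZR_nonneg n F : (forall t, (1 <= t <= Z.of_nat n)%Z -> 0 <= F t) -> 0 <= sumZR n F.
Proof. intros H. replace 0 with (sumZR n (fun _ => 0)). apply sumZR_le; auto.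
 clear H; induction n; simpl; auto. rewrite IHn; ring. Qed.

Lemma sumZR_const n c : sumZR n (fun _ => c) = INR n * c.
Proof. induction n; simpl sumZR. simpl; ring. rewrite IHn, S_INR; ring. Qed.

Lemma RtoC_sumZR n F : RtoC (sumZR n F) = sumZ n (fun t => RtoC (F t)).
Proof. induction n; simpl. auto. rewrite RtoC_plus, IHn. auto. Qed.

Lemma Cmod_sumZ n F : Cmod (sumZ n F) <= sumZR n (fun t => Cmod (F t)).
Proof. induction n; simpl. rewrite Cmod_0; lra.
 eapply Rle_trans. apply Cmod_triangle. lra. Qed.

Lemma sumZ_first n F : sumZ (S n) F = Cplus (F 1%Z) (sumZ n (fun t => F (t + 1)%Z)).
Proof. induction n. simpl. ring.
 change (sumZ (S (S n)) F) with (Cplus (sumZ (S n) F) (F (Z.of_nat (S (S n))))).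
 rewrite IHn. simpl sumZ at 2. rewrite Cplus_assoc. f_equal. f_equal. f_equal. lia. Qed.

Lemma sumZ_shift1 n G : (forall t, G (t + Z.of_nat n)%Z = G t) ->
  sumZ n (fun t => G (t + 1)%Z) = sumZ n G.
Proof. intros HG.
 assert (H := sumZ_first n G). simpl in H.
 replace (G (Z.pos (Pos.of_succ_nat n))) with (G 1%Z) in H.
 assert (Cplus (sumZ n G) (G 1%Z) = Cplus (sumZ n (fun t => G (t+1)%Z)) (G 1%Z)) by (rewrite H; ring).
 apply (f_equal (fun z => Cminus z (G 1%Z))) in H0. 
 replace (Cminus (Cplus (sumZ n G) (G 1%Z)) (G 1%Z)) with (sumZ n G) in H0 by ring.
 rewrite H0; ring.
 rewrite <- (HG 1%Z). f_equal. lia. Qed.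

Lemma sumZ_shift_nat n G p : (forall t, G (t + Z.of_nat n)%Z = G t) ->
  sumZ n (fun t => G (t + Z.of_nat p)%Z) = sumZ n G.
Proof. intros HG. induction p. apply sumZ_ext; intros; f_equal; lia.
 rewrite <- IHp. rewrite <- (sumZ_shift1 n (fun t => G (t + Z.of_nat p)%Z)).
 apply sumZ_ext; intros; f_equal; lia.
 intros t. rewrite <- (HG (t + Z.of_nat p)%Z). f_equal; lia. Qed.

Lemma sumZ_shift n G s : (forall t, G (t + Z.of_nat n)%Z = G t) ->
  sumZ n (fun t => G (t + s)%Z) = sumZ n G.
Proof. intros HG. destruct (Z.le_ge_cases 0 s).
 replace s with (Z.of_nat (Z.to_nat s)) by lia. apply sumZ_shift_nat; auto.
 set (H0 := fun t => G (t + s)%Z).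
 transitivity (sumZ n H0). auto.
 rewrite <- (sumZ_shift_nat n H0 (Z.to_nat (-s))).
 apply sumZ_ext; intros; unfold H0; f_equal; lia.
 intros t; unfold H0. rewrite <- (HG (t + s)%Z). f_equal; lia. Qed.

Lemma sumZ_delta n F t0 : (1 <= t0 <= Z.of_nat n)%Z ->
  (forall t, (1 <= t <= Z.of_nat n)%Z -> t <> t0 -> F t = RtoC 0) -> sumZ n F = F t0.
Proof. induction n; intros H1 H2. simpl in H1; lia.
 change (sumZ (S n) F) with (Cplus (sumZ n F) (F (Z.of_nat (S n)))). destruct (Z.eq_dec t0 (Z.of_nat (S n))).
 - subst. rewrite (sumZ_ext n F (fun _ => RtoC 0)), sumZ_zero. ring.
   intros; apply H2; lia.
 - rewrite IHn. rewrite (H2 (Z.of_nat (S n))). ring. lia. lia. lia. intros; apply H2; lia. Qed.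

Lemma sumZ_const n c : sumZ n (fun _ => c) = Cmult (RtoC (INR n)) c.
Proof. induction n; simpl sumZ. simpl. ring. rewrite IHn, S_INR, RtoC_plus. ring. Qed.

Lemma cis_add a b : Cmult (cis a) (cis b) = cis (a + b).
Proof. unfold cis, Cmult; simpl. rewrite cos_plus, sin_plus. f_equal; ring. Qed.

Lemma cis_conj t : Cconj (cis t) = cis (- t).
Proof. unfold cis, Cconj; simpl. rewrite cos_neg, sin_neg. auto. Qed.

Lemma Cmod_cis t : Cmod (cis t) = 1.
Proof. unfold Cmod, cis; simpl. assert (H := sin2_cos2 t). unfold Rsqr in H.
 replace (cos t * (cos t * 1) + sin t * (sin t * 1)) with 1 by nra. apply sqrt_1. Qed.

Lemma cis_0 : cis 0 = RtoC 1.
Proof. unfold cis, RtoC. rewrite cos_0, sin_0. auto. Qed.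

Lemma cos_perZ t z : cos (t + 2 * PI * IZR z) = cos t.
Proof. destruct (Z.le_ge_cases 0 z).
 - replace (IZR z) with (INR (Z.to_nat z)). rewrite <- (cos_period t (Z.to_nat z)). f_equal; ring.
   rewrite INR_IZR_INZ. f_equal. lia.
 - rewrite <- (cos_period (t + 2 * PI * IZR z) (Z.to_nat (-z))). f_equal.
   rewrite INR_IZR_INZ. rewrite Z2Nat.id by lia. rewrite opp_IZR. ring. Qed.

Lemma sin_perZ t z : sin (t + 2 * PI * IZR z) = sin t.
Proof. destruct (Z.le_ge_cases 0 z).
 - replace (IZR z) with (INR (Z.to_nat z)). rewrite <- (sin_period t (Z.to_nat z)). f_equal; ring.
   rewrite INR_IZR_INZ. f_equal. lia.
 - rewrite <- (sin_period (t + 2 * PI * IZR z) (Z.to_nat (-z))). f_equal.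
   rewrite INR_IZR_INZ. rewrite Z2Nat.id by lia. rewrite opp_IZR. ring. Qed.

Lemma cis_perZ t z : cis (t + 2 * PI * IZR z) = cis t.
Proof. unfold cis. rewrite cos_perZ, sin_perZ. auto. Qed.

Lemma geom_gen n c th : cis th <> RtoC 1 -> cis (th * INR n) = RtoC 1 ->
  sumZ n (fun t => cis (c + th * IZR t)) = RtoC 0.
Proof. intros H1 H2. set (Sm := sumZ n (fun t => cis (c + th * IZR t))).
 assert (E1 : Cmult Sm (cis th) = sumZ n (fun t => cis (c + th * IZR (t + 1)))).
 { unfold Sm. rewrite <- sumZ_scal_r. apply sumZ_ext; intros. rewrite cis_add. f_equal.
   rewrite plus_IZR. ring. }
 assert (E2 := sumZ_first n (fun t => cis (c + th * IZR t))).
 change (sumZ (S n) (fun t => cis (c + th * IZR t))) with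
   (Cplus Sm (cis (c + th * IZR (Z.of_nat (S n))))) in E2.
 cbv beta in E2. rewrite <- E1 in E2.
 replace (cis (c + th * IZR (Z.of_nat (S n)))) with (cis (c + th * IZR 1)) in E2.
 assert (E3 : Cmult Sm (Cminus (cis th) (RtoC 1)) = RtoC 0).
 { replace (Cmult Sm (Cminus (cis th) (RtoC 1))) with
     (Cminus (Cplus (cis (c + th * IZR 1)) (Cmult Sm (cis th))) (Cplus Sm (cis (c + th * IZR 1)))) by ring.
   rewrite <- E2. ring. }
 assert (Hne : Cminus (cis th) (RtoC 1) <> RtoC 0).
 { intro H. apply H1. transitivity (Cplus (Cminus (cis th) (RtoC 1)) (RtoC 1)). ring. rewrite H; ring. }
 transitivity (Cmult (Cmult Sm (Cminus (cis th) (RtoC 1))) (Cinv (Cminus (cis th) (RtoC 1)))).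
 field. auto. rewrite E3. ring.
 rewrite <- (Cmult_1_r (cis (c + th * IZR 1))). rewrite <- H2, cis_add. f_equal.
 rewrite Nat2Z.inj_succ, succ_IZR, <- INR_IZR_INZ. ring. Qed.

Lemma cis_ne1 n d : (0 < n)%nat -> (d <> 0)%Z -> (Z.abs d < Z.of_nat n)%Z ->
  cis (2 * PI * IZR d / INR n) <> RtoC 1.
Proof. intros Hn Hd Hdn H. unfold cis, RtoC in H. injection H as Hc Hs.
 set (u := PI * IZR d / INR n).
 assert (Hu : cos (2 * u) = 1). { rewrite <- Hc. unfold u. f_equal. field. apply not_0_INR; lia. }
 rewrite cos_2a_sin in Hu. assert (Hs2 : sin u * sin u = 0) by lra.
 assert (HnR : 0 < INR n) by (apply lt_0_INR; lia).
 assert (Hb : Rabs (IZR d) < INR n). { rewrite INR_IZR_INZ, Rabs_Zabs. apply IZR_lt. auto. }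
 assert (HPI := PI_RGT_0).
 destruct (Z_lt_le_dec 0 d).
 - assert (0 < u < PI).
   { unfold u. split. apply Rdiv_lt_0_compat; auto. apply Rmult_lt_0_compat; auto. apply IZR_lt; auto.
     apply Rmult_lt_reg_r with (INR n); auto. unfold Rdiv. rewrite Rmult_assoc, Rinv_l by lra.
     rewrite Rabs_pos_eq in Hb. nra. apply IZR_le; lia. }
   assert (0 < sin u) by (apply sin_gt_0; lra). nra.
 - assert (0 < - u < PI).
   { assert (IZR d < 0) by (apply IZR_lt; lia).
     replace (- u) with (PI * (- IZR d) / INR n) by (unfold u; field; lra).
     rewrite Rabs_left in Hb by auto. split.
     apply Rdiv_lt_0_compat; auto. nra.
     apply Rmult_lt_reg_r with (INR n); auto. unfold Rdiv. rewrite Rmult_assoc, Rinv_l by lra. nra. }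
   assert (0 < sin (- u)) by (apply sin_gt_0; lra). rewrite sin_neg in H0. nra. Qed.

Lemma geom_d n d c : (0 < n)%nat -> (d <> 0)%Z -> (Z.abs d < Z.of_nat n)%Z ->
  sumZ n (fun t => cis (c + (2 * PI * IZR d / INR n) * IZR t)) = RtoC 0.
Proof. intros. apply geom_gen. apply cis_ne1; auto.
 rewrite <- cis_0, <- (Rplus_0_l (_ * _)). replace (2 * PI * IZR d / INR n * INR n) with (2 * PI * IZR d).
 apply cis_perZ. field. apply not_0_INR; lia. Qed.

Notation EX X N k i := (cis (IZR k * PI * node X N i / X)).
Notation EXc X N k i := (cis (- (IZR k * PI * node X N i / X))).

Lemma orthA X N k k' : 0 < X -> (0 < N)%nat -> (Z.abs (k - k') < Z.of_nat N)%Z ->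
  sumZ N (fun i => Cmult (EX X N k i) (EXc X N k' i)) =
  if Z.eq_dec k k' then RtoC (INR N) else RtoC 0.
Proof. intros HX HN Hk. assert (HNR : INR N <> 0) by (apply not_0_INR; lia).
 destruct (Z.eq_dec k k').
 - subst. rewrite (sumZ_ext _ _ (fun _ => RtoC 1)). rewrite sumZ_const. ring.
   intros. rewrite cis_add. rewrite <- cis_0. f_equal. ring.
 - rewrite <- (geom_d N (k - k') (- (IZR (k - k') * PI))); auto; try lia.
   apply sumZ_ext; intros. rewrite cis_add. f_equal. unfold node, hstep.
   rewrite minus_IZR. field. split; auto. lra. Qed.

Lemma orthB X N s i i' : 0 < X -> (0 < N)%nat -> (1 <= i <= Z.of_nat N)%Z -> (1 <= i' <= Z.of_nat N)%Z ->
  sumZ N (fun t => Cmult (EX X N (t - s) i) (EXc X N (t - s) i')) =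
  if Z.eq_dec i i' then RtoC (INR N) else RtoC 0.
Proof. intros HX HN Hi Hi'. assert (HNR : INR N <> 0) by (apply not_0_INR; lia).
 destruct (Z.eq_dec i i').
 - subst. rewrite (sumZ_ext _ _ (fun _ => RtoC 1)). rewrite sumZ_const. ring.
   intros. rewrite cis_add. rewrite <- cis_0. f_equal. ring.
 - rewrite <- (geom_d N (i - i') (- (IZR s * (2 * PI * IZR (i - i') / INR N)))); auto; try lia.
   apply sumZ_ext; intros. rewrite cis_add. f_equal. unfold node, hstep.
   rewrite !minus_IZR. field. split; auto. lra. Qed.

Lemma swap4 N M P Q (F : Z -> Z -> Z -> Z -> C) :
  sumZ N (fun i => sumZ M (fun j => sumZ P (fun a => sumZ Q (fun b => F i j a b)))) =
  sumZ P (fun a => sumZ Q (fun b => sumZ N (fun i => sumZ M (fun j => F i j a b)))).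
Proof.
 transitivity (sumZ N (fun i => sumZ P (fun a => sumZ M (fun j => sumZ Q (fun b => F i j a b))))).
 apply sumZ_ext; intros; apply sumZ_swap.
 transitivity (sumZ N (fun i => sumZ P (fun a => sumZ Q (fun b => sumZ M (fun j => F i j a b))))).
 apply sumZ_ext; intros; apply sumZ_ext; intros; apply sumZ_swap.
 rewrite sumZ_swap. apply sumZ_ext; intros; apply sumZ_swap. Qed.

Lemma sep2 N M c (A B : Z -> C) :
  sumZ N (fun i => sumZ M (fun j => Cmult c (Cmult (A i) (B j)))) =
  Cmult c (Cmult (sumZ N A) (sumZ M B)).
Proof. transitivity (sumZ N (fun i => Cmult (A i) (Cmult c (sumZ M B)))).
 apply sumZ_ext; intros. rewrite <- !sumZ_scal. apply sumZ_ext; intros; ring.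
 rewrite sumZ_scal_r. ring. Qed.

Lemma sumS_scal_r N M F c : Cmult (sumS N M F) c = sumS N M (fun i j => Cmult (F i j) c).
Proof. unfold sumS. rewrite <- sumZ_scal_r. apply sumZ_ext; intros. rewrite <- sumZ_scal_r. auto. Qed.
Lemma sumS_scal N M F c : Cmult c (sumS N M F) = sumS N M (fun i j => Cmult c (F i j)).
Proof. unfold sumS. rewrite <- sumZ_scal. apply sumZ_ext; intros. rewrite <- sumZ_scal. auto. Qed.
Lemma sumShat_scal_r N M F c : Cmult (sumShat N M F) c = sumShat N M (fun i j => Cmult (F i j) c).
Proof. unfold sumShat. rewrite <- sumZ_scal_r. apply sumZ_ext; intros. rewrite <- sumZ_scal_r. auto. Qed.
Lemma sumShat_scal N M F c : Cmult c (sumShat N M F) = sumShat N M (fun i j => Cmult c (F i j)).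
Proof. unfold sumShat. rewrite <- sumZ_scal. apply sumZ_ext; intros. rewrite <- sumZ_scal. auto. Qed.
Lemma sumShat_plus N M F G : sumShat N M (fun i j => Cplus (F i j) (G i j)) = Cplus (sumShat N M F) (sumShat N M G).
Proof. unfold sumShat. rewrite <- sumZ_plus. apply sumZ_ext; intros. rewrite <- sumZ_plus. auto. Qed.
Lemma sumShat_conj N M F : Cconj (sumShat N M F) = sumShat N M (fun i j => Cconj (F i j)).
Proof. unfold sumShat. rewrite sumZ_conj. apply sumZ_ext; intros. rewrite sumZ_conj. auto. Qed.
Lemma sumS_swap N M P Q F :
  sumS N M (fun i j => sumShat P Q (fun k l => F i j k l)) =
  sumShat P Q (fun k l => sumS N M (fun i j => F i j k l)).
Proof. unfold sumS, sumShat. apply swap4. Qed.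

Definition inShat (N M : nat) (k l : Z) : Prop :=
  (1 - Z.of_nat (Nat.div2 N) <= k <= Z.of_nat N - Z.of_nat (Nat.div2 N))%Z /\
  (1 - Z.of_nat (Nat.div2 M) <= l <= Z.of_nat M - Z.of_nat (Nat.div2 M))%Z.

Lemma sumShat_ext N M F G : (forall k l, inShat N M k l -> F k l = G k l) -> sumShat N M F = sumShat N M G.
Proof. intros H. unfold sumShat. apply sumZ_ext; intros. apply sumZ_ext; intros. apply H.
 split; lia. Qed.

Lemma inv_dft X Y N M (c : Z -> Z -> C) k l : 0 < X -> 0 < Y -> (0 < N)%nat -> (0 < M)%nat ->
  inShat N M k l ->
  sumS N M (fun i j => Cmult (sumShat N M (fun k' l' => Cmult (c k' l') (Cmult (EX X N k' i) (EX Y M l' j))))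
                             (Cmult (EXc X N k i) (EXc Y M l j))) =
  Cmult (RtoC (INR N * INR M)) (c k l).
Proof. intros HX HY HN HM [Hk Hl].
 transitivity (sumShat N M (fun k' l' => Cmult (c k' l')
    (Cmult (if Z.eq_dec k' k then RtoC (INR N) else RtoC 0) (if Z.eq_dec l' l then RtoC (INR M) else RtoC 0)))).
 - transitivity (sumS N M (fun i j => sumShat N M (fun k' l' =>
      Cmult (Cmult (c k' l') (Cmult (EX X N k' i) (EX Y M l' j))) (Cmult (EXc X N k i) (EXc Y M l j))))).
   { unfold sumS. apply sumZ_ext; intros. apply sumZ_ext; intros. apply sumShat_scal_r. }
   rewrite sumS_swap. apply sumShat_ext; intros k' l' [Hk' Hl'].
   rewrite <- (orthA X N k' k), <- (orthA Y M l' l); auto; try lia.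
   unfold sumS. rewrite <- sep2. apply sumZ_ext; intros. apply sumZ_ext; intros. ring.
 - unfold sumShat. rewrite (sumZ_delta _ _ (k + Z.of_nat (Nat.div2 N))%Z); try lia.
   rewrite (sumZ_delta _ _ (l + Z.of_nat (Nat.div2 M))%Z); try lia.
   replace (k + Z.of_nat (Nat.div2 N) - Z.of_nat (Nat.div2 N))%Z with k by lia.
   replace (l + Z.of_nat (Nat.div2 M) - Z.of_nat (Nat.div2 M))%Z with l by lia.
   destruct (Z.eq_dec k k); [|congruence]. destruct (Z.eq_dec l l); [|congruence].
   rewrite RtoC_mult. ring.
   intros t Ht Hne. destruct (Z.eq_dec (t - Z.of_nat (Nat.div2 M))%Z l). lia. ring.
   intros t Ht Hne. rewrite (sumZ_ext _ _ (fun _ => RtoC 0)). apply sumZ_zero.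
   intros. destruct (Z.eq_dec (t - Z.of_nat (Nat.div2 N))%Z k). lia. ring. Qed.

Lemma conj_EXc X N k i : Cconj (EXc X N k i) = EX X N k i.
Proof. rewrite cis_conj, Ropp_involutive. auto. Qed.
Lemma conj_EX X N k i : Cconj (EX X N k i) = EXc X N k i.
Proof. rewrite cis_conj. auto. Qed.
Lemma conj_RtoC r : Cconj (RtoC r) = RtoC r.
Proof. unfold Cconj, RtoC; simpl. f_equal. ring. Qed.

Lemma sumS_ext N M F G : (forall i j, F i j = G i j) -> sumS N M F = sumS N M G.
Proof. intros H. unfold sumS. apply sumZ_ext; intros; apply sumZ_ext; intros; auto. Qed.
Lemma sumShat_ext' N M F G : (forall i j, F i j = G i j) -> sumShat N M F = sumShat N M G.
Proof. intros H. unfold sumShat. apply sumZ_ext; intros; apply sumZ_ext; intros; auto. Qed.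
Lemma sumS_conj N M F : Cconj (sumS N M F) = sumS N M (fun i j => Cconj (F i j)).
Proof. unfold sumS. rewrite sumZ_conj. apply sumZ_ext; intros. rewrite sumZ_conj. auto. Qed.

Lemma dft_inv X Y N M u i j : 0 < X -> 0 < Y -> (0 < N)%nat -> (0 < M)%nat ->
  (1 <= i <= Z.of_nat N)%Z -> (1 <= j <= Z.of_nat M)%Z ->
  sumShat N M (fun k l => Cmult (dft X Y N M u k l) (Cmult (EX X N k i) (EX Y M l j))) =
  Cmult (RtoC (INR N * INR M)) (u i j).
Proof. intros HX HY HN HM Hi Hj. unfold dft.
 transitivity (sumShat N M (fun k l => sumS N M (fun i' j' =>
   Cmult (Cmult (u i' j') (Cmult (EXc X N k i') (EXc Y M l j'))) (Cmult (EX X N k i) (EX Y M l j))))).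
 { apply sumShat_ext'; intros. rewrite sumS_scal_r. auto. }
 rewrite <- sumS_swap.
 transitivity (sumS N M (fun i' j' => Cmult (u i' j')
    (Cmult (if Z.eq_dec i i' then RtoC (INR N) else RtoC 0) (if Z.eq_dec j j' then RtoC (INR M) else RtoC 0)))).
 - unfold sumS. apply sumZ_ext; intros i' Hi'. apply sumZ_ext; intros j' Hj'.
   rewrite <- (orthB X N (Z.of_nat (Nat.div2 N)) i i'), <- (orthB Y M (Z.of_nat (Nat.div2 M)) j j'); auto.
   unfold sumShat. rewrite <- sep2. apply sumZ_ext; intros. apply sumZ_ext; intros. ring.
 - unfold sumS. rewrite (sumZ_delta _ _ i); auto. rewrite (sumZ_delta _ _ j); auto.
   destruct (Z.eq_dec i i); [|congruence]. destruct (Z.eq_dec j j); [|congruence].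
   rewrite RtoC_mult. ring.
   intros t Ht Hne. destruct (Z.eq_dec j t). lia. ring.
   intros t Ht Hne. rewrite (sumZ_ext _ _ (fun _ => RtoC 0)). apply sumZ_zero.
   intros. destruct (Z.eq_dec i t). lia. ring. Qed.

Lemma parseval_dft X Y N M u : 0 < X -> 0 < Y -> (0 < N)%nat -> (0 < M)%nat ->
  sumShat N M (fun k l => Cmult (dft X Y N M u k l) (Cconj (dft X Y N M u k l))) =
  Cmult (RtoC (INR N * INR M)) (sumS N M (fun i j => Cmult (u i j) (Cconj (u i j)))).
Proof. intros HX HY HN HM.
 transitivity (sumShat N M (fun k l => sumS N M (fun i j =>
     Cmult (Cconj (u i j)) (Cmult (dft X Y N M u k l) (Cmult (EX X N k i) (EX Y M l j)))))).
 { apply sumShat_ext'; intros k l. unfold dft at 2. rewrite sumS_conj, sumS_scal.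
   apply sumS_ext; intros. rewrite !Cmult_conj, !conj_EXc. ring. }
 rewrite <- sumS_swap. rewrite sumS_scal. unfold sumS. apply sumZ_ext; intros i Hi. apply sumZ_ext; intros j Hj.
 rewrite <- sumShat_scal. rewrite dft_inv; auto. ring. Qed.

Lemma parseval_inv X Y N M (c : Z -> Z -> C) : 0 < X -> 0 < Y -> (0 < N)%nat -> (0 < M)%nat ->
  let w := fun i j => Cmult (RtoC (/ (INR N * INR M))) (sumShat N M (fun k l => Cmult (c k l) (Cmult (EX X N k i) (EX Y M l j)))) in
  sumS N M (fun i j => Cmult (w i j) (Cconj (w i j))) =
  Cmult (RtoC (/ (INR N * INR M))) (sumShat N M (fun k l => Cmult (c k l) (Cconj (c k l)))).
Proof. intros HX HY HN HM w.
 assert (HNM : INR N * INR M <> 0). { apply Rmult_integral_contrapositive; split; apply not_0_INR; lia. }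
 transitivity (sumS N M (fun i j => Cmult (RtoC (/ (INR N * INR M))) (sumShat N M (fun k l =>
     Cmult (Cconj (c k l)) (Cmult (w i j) (Cmult (EXc X N k i) (EXc Y M l j))))))).
 { apply sumS_ext; intros i j. unfold w at 2. rewrite Cmult_conj, conj_RtoC, sumShat_conj.
   rewrite Cmult_assoc, (Cmult_comm (w i j)), <- Cmult_assoc. f_equal.
   rewrite sumShat_scal. apply sumShat_ext'; intros k l.
   rewrite !Cmult_conj, !conj_EX. ring. }
 rewrite <- sumS_scal. f_equal. rewrite sumS_swap. apply sumShat_ext; intros k l Hkl.
 rewrite <- sumS_scal. unfold w.
 transitivity (Cmult (Cconj (c k l)) (Cmult (RtoC (/ (INR N * INR M)))
   (sumS N M (fun i j => Cmult (sumShat N M (fun k' l' => Cmult (c k' l') (Cmult (EX X N k' i) (EX Y M l' j))))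
        (Cmult (EXc X N k i) (EXc Y M l j)))))).
 { rewrite !sumS_scal. apply sumS_ext; intros. ring. }
 rewrite inv_dft; auto.
 transitivity (Cmult (Cconj (c k l)) (Cmult (RtoC (/ (INR N * INR M) * (INR N * INR M))) (c k l))).
 rewrite (RtoC_mult (/ _)). ring. rewrite Rinv_l; auto. ring. Qed.

Lemma dft_spec X Y N M m u k l : 0 < X -> 0 < Y -> (0 < N)%nat -> (0 < M)%nat -> inShat N M k l ->
  dft X Y N M (spec_op X Y N M m u) k l = Cmult (m k l) (dft X Y N M u k l).
Proof. intros HX HY HN HM Hkl.
 assert (HNM : INR N * INR M <> 0). { apply Rmult_integral_contrapositive; split; apply not_0_INR; lia. }
 unfold dft at 1, spec_op.
 transitivity (Cmult (RtoC (/ (INR N * INR M)))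
   (sumS N M (fun i j => Cmult (sumShat N M (fun k' l' => Cmult (Cmult (m k' l') (dft X Y N M u k' l')) (Cmult (EX X N k' i) (EX Y M l' j))))
        (Cmult (EXc X N k i) (EXc Y M l j))))).
 { rewrite !sumS_scal. apply sumS_ext; intros. ring. }
 rewrite (inv_dft X Y N M (fun k' l' => Cmult (m k' l') (dft X Y N M u k' l'))); auto.
 rewrite Cmult_assoc, <- RtoC_mult, Rinv_l; auto. ring. Qed.

Lemma node_per X N i : (0 < N)%nat -> node X N (i + Z.of_nat N)%Z = node X N i + 2 * X.
Proof. intros HN. unfold node, hstep. rewrite plus_IZR, <- INR_IZR_INZ. field. apply not_0_INR; lia. Qed.

Lemma EXc_per X N k i : 0 < X -> (0 < N)%nat -> EXc X N k (i + Z.of_nat N)%Z = EXc X N k i.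
Proof. intros HX HN. rewrite node_per; auto. rewrite <- (cis_perZ (- (IZR k * PI * node X N i / X)) (- k)). f_equal.
 rewrite opp_IZR. field. lra. Qed.

Lemma EXc_split X N k i m : 0 < X -> (0 < N)%nat ->
  EXc X N k i = Cmult (Cmult (EXc X N k (i - m)) (EXc X N k m)) (cis (- (IZR k * PI))).
Proof. intros HX HN. rewrite !cis_add. f_equal. unfold node, hstep. rewrite minus_IZR. field.
 split. apply not_0_INR; lia. lra. Qed.

Lemma shift2 N M (G : Z -> Z -> C) m n :
  (forall i j, G (i + Z.of_nat N)%Z j = G i j) -> (forall i j, G i (j + Z.of_nat M)%Z = G i j) ->
  sumS N M (fun i j => G (i - m)%Z (j - n)%Z) = sumS N M G.
Proof. intros H1 H2. unfold sumS.
 transitivity (sumZ N (fun i => sumZ M (fun j => G (i - m)%Z j))).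
 apply sumZ_ext; intros. apply (sumZ_shift M (fun j => G (t - m)%Z j) (- n)%Z). intros; apply H2.
 rewrite !(sumZ_swap N M). apply sumZ_ext; intros.
 apply (sumZ_shift N (fun i => G i t) (- m)%Z). intros; apply H1. Qed.

Lemma RtoC_sumSR N M F : RtoC (sumSR N M F) = sumS N M (fun i j => RtoC (F i j)).
Proof. unfold sumSR, sumS. rewrite RtoC_sumZR. apply sumZ_ext; intros. apply RtoC_sumZR. Qed.

Lemma sumS_swapS N M P Q (F : Z -> Z -> Z -> Z -> C) :
  sumS N M (fun i j => sumS P Q (fun m n => F i j m n)) = sumS P Q (fun m n => sumS N M (fun i j => F i j m n)).
Proof. unfold sumS. apply swap4. Qed.

Lemma conv_thm X Y N M Jg f k l : 0 < X -> 0 < Y -> (0 < N)%nat -> (0 < M)%nat ->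
  (forall i j, Jg (i + Z.of_nat N)%Z j = Jg i j) -> (forall i j, Jg i (j + Z.of_nat M)%Z = Jg i j) ->
  dft X Y N M (toC (convN X Y N M Jg f)) k l =
  Cmult (Cmult (RtoC (hstep X N * hstep Y M)) (Cmult (cis (- (IZR k * PI))) (cis (- (IZR l * PI)))))
        (Cmult (dft X Y N M (toC Jg) k l) (dft X Y N M (toC f) k l)).
Proof. intros HX HY HN HM HJ1 HJ2. unfold dft at 1, toC at 1, convN.
 set (sg := Cmult (cis (- (IZR k * PI))) (cis (- (IZR l * PI)))).
 set (G := fun i j => Cmult (RtoC (Jg i j)) (Cmult (EXc X N k i) (EXc Y M l j))).
 transitivity (sumS N M (fun i j => sumS N M (fun m n =>
   Cmult (Cmult (RtoC (hstep X N * hstep Y M)) sg)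
     (Cmult (Cmult (RtoC (f m n)) (Cmult (EXc X N k m) (EXc Y M l n))) (G (i - m)%Z (j - n)%Z))))).
 { apply sumS_ext; intros i j. rewrite RtoC_mult, RtoC_sumSR, sumS_scal, sumS_scal_r.
   apply sumS_ext; intros m n. unfold G, sg. rewrite (EXc_split X N k i m), (EXc_split Y M l j n); auto.
   rewrite (RtoC_mult (Jg (i-m)%Z (j-n)%Z)). ring. }
 rewrite sumS_swapS.
 transitivity (sumS N M (fun m n => Cmult (Cmult (RtoC (hstep X N * hstep Y M)) sg)
     (Cmult (Cmult (RtoC (f m n)) (Cmult (EXc X N k m) (EXc Y M l n))) (sumS N M G)))).
 { apply sumS_ext; intros m n. rewrite <- (shift2 N M G m n).
   rewrite !sumS_scal. auto.
   intros; unfold G; cbv beta. rewrite HJ1, EXc_per; auto.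
   intros; unfold G; cbv beta. rewrite HJ2, EXc_per; auto. }
 transitivity (Cmult (sumS N M (fun m n => Cmult (Cmult (RtoC (hstep X N * hstep Y M)) sg)
     (Cmult (RtoC (f m n)) (Cmult (EXc X N k m) (EXc Y M l n))))) (sumS N M G)).
 rewrite sumS_scal_r. apply sumS_ext; intros; ring.
 rewrite <- sumS_scal. unfold dft, toC. fold G. ring. Qed.

Lemma sin_lower u : 0 <= u <= PI/2 -> u / 4 <= sin u.
Proof. intros Hu. assert (H4 := PI_4). assert (H3 := PI2_3_2).
destruct (SIN u) as [H _]; try lra.
assert (E : sin_lb u = u - u^3/6 + u^5/120 - u^7/5040).
{ unfold sin_lb, sin_approx, sin_term. simpl. field. }
rewrite E in H. assert (u <= 2) by lra.
assert (0 <= u * u <= 4) by nra.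
assert (u^3/6 <= 2/3 * u) by nra.
assert (u^7/5040 <= u^5/120) by (assert (0 <= u^5) by (apply pow_le; lra); nra).
lra.
Qed.

Lemma Cmod_RtoC_mult r z : Cmod (Cmult (RtoC r) z) = Rabs r * Cmod z.
Proof. rewrite Cmod_mult, Cmod_R. auto. Qed.

Lemma sbp N (a : Z -> R) (e : Z -> C) w :
  (forall i, a (i + Z.of_nat N)%Z = a i) -> (forall i, e (i + Z.of_nat N)%Z = e i) ->
  (forall i, e (i + 1)%Z = Cmult (e i) w) -> (forall i, Cmod (e i) = 1) -> Cmod w = 1 ->
  Cmod (sumZ N (fun i => Cmult (RtoC (a i)) (e i))) * Cmod (Cminus (RtoC 1) w) <=
  sumZR N (fun i => Rabs (a (i + 1)%Z - a i)).
Proof. intros Ha He Hw He1 Hw1.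
 set (S := sumZ N (fun i => Cmult (RtoC (a i)) (e i))).
 assert (H1 : sumZ N (fun i => Cmult (RtoC (a (i+1)%Z)) (e (i+1)%Z)) = S).
 { unfold S. apply (sumZ_shift1 N (fun i => Cmult (RtoC (a i)) (e i))). intros. rewrite Ha, He. auto. }
 assert (H2 : Cmult S (Cminus (RtoC 1) w) = Cmult w (sumZ N (fun i => Cmult (RtoC (a (i+1)%Z - a i)) (e i)))).
 { symmetry. rewrite <- sumZ_scal.
   transitivity (sumZ N (fun i => Cplus (Cmult (RtoC (a (i+1)%Z)) (e (i+1)%Z)) (Cmult (Copp w) (Cmult (RtoC (a i)) (e i))))).
   apply sumZ_ext; intros. rewrite Hw, RtoC_minus. ring.
   rewrite sumZ_plus, sumZ_scal, H1. unfold S. ring. }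
 rewrite <- Cmod_mult, H2, Cmod_mult, Hw1, Rmult_1_l.
 eapply Rle_trans. apply Cmod_sumZ. apply sumZR_le; intros.
 rewrite Cmod_mult, Cmod_R, He1. lra. Qed.

Lemma w_bound N k : (0 < N)%nat -> (2 * Z.abs k <= Z.of_nat N)%Z ->
  PI * Rabs (IZR k) / (2 * INR N) <= Cmod (Cminus (RtoC 1) (cis (- (2 * PI * IZR k / INR N)))).
Proof. intros HN Hk. assert (HNR : 0 < INR N) by (apply lt_0_INR; lia).
 set (t := PI * IZR k / INR N).
 replace (2 * PI * IZR k / INR N) with (2 * t) by (unfold t; field; lra).
 replace (PI * Rabs (IZR k) / (2 * INR N)) with (Rabs t / 2).
 2:{ unfold t. unfold Rdiv. rewrite !Rabs_mult, Rabs_pos_eq by (assert (H:=PI_RGT_0); lra).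
     rewrite (Rabs_pos_eq (/ INR N)) by (left; apply Rinv_0_lt_compat; auto). field. lra. }
 assert (Ht : Rabs t <= PI / 2).
 { unfold t. unfold Rdiv. rewrite !Rabs_mult, Rabs_pos_eq by (assert (H:=PI_RGT_0); lra).
   rewrite (Rabs_pos_eq (/ INR N)) by (left; apply Rinv_0_lt_compat; auto).
   assert (2 * Rabs (IZR k) <= INR N).
   { rewrite INR_IZR_INZ, Rabs_Zabs. rewrite <- mult_IZR. apply IZR_le. lia. }
   assert (HP:=PI_RGT_0).
   apply Rmult_le_reg_r with (INR N); auto. rewrite Rmult_assoc, Rinv_l by lra. nra. }
 assert (Hs : Rabs t / 4 <= Rabs (sin t)).
 { destruct (Rle_dec 0 t).
   - rewrite Rabs_pos_eq in * by auto. rewrite Rabs_pos_eq. apply sin_lower; lra.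
     apply sin_ge_0; auto. assert (H:=PI_RGT_0); lra.
   - rewrite Rabs_left in * by lra. replace (sin t) with (- sin (-t)) by (rewrite sin_neg; ring).
     rewrite Rabs_Ropp, Rabs_pos_eq. apply sin_lower; lra.
     apply sin_ge_0; lra. }
 assert (Hc : cos (2 * t) = 1 - 2 * sin t * sin t) by apply cos_2a_sin.
 assert (Hsc : sin (2 * t) ^ 2 + cos (2 * t) ^ 2 = 1).
 { assert (H := sin2_cos2 (2 * t)). unfold Rsqr in H. lra. }
 unfold Cmod, Cminus, Cplus, Copp, cis, RtoC; simpl. rewrite cos_neg, sin_neg.
 rewrite <- (sqrt_pow2 (Rabs t / 2)) by (assert (H := Rabs_pos t); lra).
 apply sqrt_le_1_alt.
 assert (HA : 0 <= Rabs t / 4) by (assert (H := Rabs_pos t); lra).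
 assert (Rabs t / 4 * (Rabs t / 4) <= Rabs (sin t) * Rabs (sin t)) by nra.
 rewrite <- Rabs_mult in H. rewrite (Rabs_pos_eq (sin t * sin t)) in H by apply Rle_0_sqr.
 set (c := cos (2 * t)) in *. set (s2 := sin (2 * t)) in *.
 replace ((1 + - c) * ((1 + - c) * 1) + (0 + - - s2) * ((0 + - - s2) * 1)) with (2 - 2 * c).
 rewrite Hc. nra. replace (s2 * s2) with (1 - c * c) by (simpl in Hsc; lra). ring_simplify. 
 replace (s2 ^ 2) with (1 - c ^ 2) by lra. ring. Qed.

Lemma Jhat_bound X Y N M (Jg : Z -> Z -> R) L k l : 0 < X -> 0 < Y -> (0 < N)%nat -> (0 < M)%nat -> 0 <= L ->
  (forall i j, Jg (i + Z.of_nat N)%Z j = Jg i j) ->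
  (forall i j, (1 <= i <= Z.of_nat N)%Z -> (1 <= j <= Z.of_nat M)%Z -> Rabs (Jg (i + 1)%Z j - Jg i j) <= L * hstep X N) ->
  (2 * Z.abs k <= Z.of_nat N)%Z ->
  Rabs (IZR k * PI / X) * (hstep X N * hstep Y M * Cmod (dft X Y N M (toC Jg) k l)) <= 16 * X * Y * L.
Proof. intros HX HY HN HM HL HJ HLip Hk.
 assert (HNR : 0 < INR N) by (apply lt_0_INR; lia).
 assert (HMR : 0 < INR M) by (apply lt_0_INR; lia).
 assert (HP := PI_RGT_0).
 assert (Hhx : hstep X N = 2 * X / INR N) by auto.
 assert (Hhy : hstep Y M = 2 * Y / INR M) by auto.
 assert (Hhx0 : 0 < hstep X N) by (rewrite Hhx; apply Rdiv_lt_0_compat; lra).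
 assert (Hhy0 : 0 < hstep Y M) by (rewrite Hhy; apply Rdiv_lt_0_compat; lra).
 destruct (Z.eq_dec k 0) as [Hk0|Hk0].
 { subst. replace (IZR 0 * PI / X) with 0 by (simpl; field; lra). rewrite Rabs_R0.
   assert (0 <= X * Y) by nra. nra. }
 set (D := PI * Rabs (IZR k) / (2 * INR N)).
 assert (HkR : 0 < Rabs (IZR k)). { apply Rabs_pos_lt. apply not_0_IZR. auto. }
 assert (HD : 0 < D). { unfold D. apply Rdiv_lt_0_compat; nra. }
 set (w := cis (- (2 * PI * IZR k / INR N))).
 assert (HwD : D <= Cmod (Cminus (RtoC 1) w)) by (apply w_bound; auto).
 assert (Hsum : Cmod (dft X Y N M (toC Jg) k l) <= INR M * (INR N * (L * hstep X N) / D)).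
 { unfold dft, sumS, toC. rewrite sumZ_swap.
   eapply Rle_trans. apply Cmod_sumZ. rewrite <- sumZR_const. apply sumZR_le; intros j Hj.
   rewrite (sumZ_ext _ _ (fun i => Cmult (EXc Y M l j) (Cmult (RtoC (Jg i j)) (EXc X N k i)))) by (intros; ring).
   rewrite sumZ_scal, Cmod_mult, Cmod_cis, Rmult_1_l.
   apply Rmult_le_reg_r with D; auto. unfold Rdiv. rewrite Rmult_assoc, Rinv_l, Rmult_1_r by lra.
   eapply Rle_trans. apply Rmult_le_compat_l. apply Cmod_ge_0. apply HwD.
   eapply Rle_trans. apply (sbp N (fun i => Jg i j) (fun i => EXc X N k i) w); auto.
   - intros. apply EXc_per; auto.
   - intros. unfold w. rewrite cis_add. f_equal. unfold node, hstep. rewrite plus_IZR. field. split; lra.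
   - intros. apply Cmod_cis.
   - apply Cmod_cis.
   - rewrite <- sumZR_const. apply sumZR_le; intros. apply HLip; auto. }
 replace (Rabs (IZR k * PI / X)) with (PI * Rabs (IZR k) / X).
 2:{ unfold Rdiv. rewrite !Rabs_mult, (Rabs_pos_eq PI) by lra. rewrite (Rabs_pos_eq (/ X)).
     ring. left; apply Rinv_0_lt_compat; auto. }
 eapply Rle_trans. apply Rmult_le_compat_l. apply Rdiv_le_0_compat; nra.
 apply Rmult_le_compat_l. nra. apply Hsum.
 right. unfold D. rewrite Hhx, Hhy. field. repeat split; lra. Qed.

Definition sumShatR (N M : nat) (F : Z -> Z -> R) : R :=
  sumZR N (fun a => sumZR M (fun b => F (a - Z.of_nat (Nat.div2 N))%Z (b - Z.of_nat (Nat.div2 M))%Z)).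

Lemma Cmod_sumShat N M F : Cmod (sumShat N M F) <= sumShatR N M (fun k l => Cmod (F k l)).
Proof. unfold sumShat, sumShatR. eapply Rle_trans. apply Cmod_sumZ. apply sumZR_le; intros. apply Cmod_sumZ. Qed.
Lemma sumShatR_le N M F G : (forall k l, inShat N M k l -> F k l <= G k l) -> sumShatR N M F <= sumShatR N M G.
Proof. intros H. unfold sumShatR. apply sumZR_le; intros; apply sumZR_le; intros. apply H. split; lia. Qed.
Lemma sumShatR_plus N M F G : sumShatR N M (fun k l => F k l + G k l) = sumShatR N M F + sumShatR N M G.
Proof. unfold sumShatR. rewrite <- sumZR_plus. apply sumZR_ext; intros. apply sumZR_plus. Qed.
Lemma sumShatR_scal N M c F : sumShatR N M (fun k l => c * F k l) = c * sumShatR N M F.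
Proof. unfold sumShatR. rewrite <- sumZR_scal. apply sumZR_ext; intros. apply sumZR_scal. Qed.
Lemma RtoC_sumShatR N M F : RtoC (sumShatR N M F) = sumShat N M (fun k l => RtoC (F k l)).
Proof. unfold sumShatR, sumShat. rewrite RtoC_sumZR. apply sumZ_ext; intros. apply RtoC_sumZR. Qed.
Lemma RtoC_inj a b : RtoC a = RtoC b -> a = b.
Proof. intros H. apply (f_equal fst) in H. exact H. Qed.
Lemma RtoC_Cmod2 z : RtoC (Cmod z ^ 2) = Cmult z (Cconj z).
Proof. apply Cmod2_conj. Qed.

Section Main.
Variables (X Y : R) (N M : nat).
Hypothesis (HX : 0 < X) (HY : 0 < Y) (HN : (0 < N)%nat) (HM : (0 < M)%nat).

Lemma spec_spec m1 m2 u i j :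
  spec_op X Y N M m1 (spec_op X Y N M m2 u) i j =
  Cmult (RtoC (/ (INR N * INR M))) (sumShat N M (fun k l =>
     Cmult (Cmult (Cmult (m1 k l) (m2 k l)) (dft X Y N M u k l)) (Cmult (EX X N k i) (EX Y M l j)))).
Proof. unfold spec_op at 1. f_equal. apply sumShat_ext; intros. rewrite dft_spec; auto. ring. Qed.

Lemma ip_rep u (c : Z -> Z -> C) :
  ipN X Y N M u (fun i j => Cmult (RtoC (/ (INR N * INR M))) (sumShat N M (fun k l => Cmult (c k l) (Cmult (EX X N k i) (EX Y M l j))))) =
  Cmult (RtoC (hstep X N * hstep Y M * / (INR N * INR M))) (sumShat N M (fun k l => Cmult (Cconj (c k l)) (dft X Y N M u k l))).
Proof. unfold ipN. rewrite (RtoC_mult (hstep X N * hstep Y M) (/ _)), <- Cmult_assoc. f_equal.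
 transitivity (sumS N M (fun i j => Cmult (RtoC (/ (INR N * INR M))) (sumShat N M (fun k l =>
    Cmult (Cconj (c k l)) (Cmult (u i j) (Cmult (EXc X N k i) (EXc Y M l j))))))).
 { apply sumS_ext; intros i j. rewrite Cmult_conj, conj_RtoC, sumShat_conj.
   rewrite Cmult_assoc, (Cmult_comm (u i j)), <- Cmult_assoc. f_equal.
   rewrite sumShat_scal. apply sumShat_ext'; intros k l. rewrite !Cmult_conj, !conj_EX. ring. }
 rewrite <- sumS_scal. f_equal. rewrite sumS_swap. apply sumShat_ext'; intros k l.
 rewrite <- sumS_scal. reflexivity. Qed.

Lemma nrm_f f : hstep X N * hstep Y M * / (INR N * INR M) *
   sumShatR N M (fun k l => Cmod (dft X Y N M f k l) ^ 2) = nrm2sq X Y N M f.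
Proof. assert (HNM : INR N * INR M <> 0). { apply Rmult_integral_contrapositive; split; apply not_0_INR; lia. }
 unfold nrm2sq. rewrite Rmult_assoc. f_equal.
 apply RtoC_inj. rewrite RtoC_mult, RtoC_sumShatR.
 rewrite (sumShat_ext' _ _ _ (fun k l => Cmult (dft X Y N M f k l) (Cconj (dft X Y N M f k l)))) by (intros; apply RtoC_Cmod2).
 rewrite parseval_dft; auto. unfold sumSR. rewrite RtoC_sumZR.
 transitivity (Cmult (RtoC (/ (INR N * INR M) * (INR N * INR M))) (sumS N M (fun i j => Cmult (f i j) (Cconj (f i j))))).
 rewrite (RtoC_mult (/ _) (INR N * INR M)); ring. rewrite Rinv_l by auto. rewrite Cmult_1_l. unfold sumS. apply sumZ_ext; intros.
 rewrite RtoC_sumZR. apply sumZ_ext; intros. rewrite RtoC_Cmod2. auto. Qed.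

Lemma nrm_spec m u : hstep X N * hstep Y M * / (INR N * INR M) *
   sumShatR N M (fun k l => Cmod (Cmult (m k l) (dft X Y N M u k l)) ^ 2) = nrm2sq X Y N M (spec_op X Y N M m u).
Proof. assert (HNM : INR N * INR M <> 0). { apply Rmult_integral_contrapositive; split; apply not_0_INR; lia. }
 unfold nrm2sq. rewrite Rmult_assoc. f_equal.
 apply RtoC_inj. rewrite RtoC_mult, RtoC_sumShatR. unfold sumSR. rewrite RtoC_sumZR.
 rewrite (sumShat_ext' _ _ _ (fun k l => Cmult (Cmult (m k l) (dft X Y N M u k l)) (Cconj (Cmult (m k l) (dft X Y N M u k l))))) by (intros; apply RtoC_Cmod2).
 rewrite <- (parseval_inv X Y N M (fun k l => Cmult (m k l) (dft X Y N M u k l))); auto.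
 unfold sumS, spec_op. apply sumZ_ext; intros. rewrite RtoC_sumZR. apply sumZ_ext; intros.
 rewrite RtoC_Cmod2. auto. Qed.

End Main.

Lemma bnd2 (F : R -> R -> R) : (forall p : R * R, continuous (fun q : R * R => F (fst q) (snd q)) p) ->
  forall a b c d, exists B, forall x y, a <= x <= b -> c <= y <= d -> Rabs (F x y) <= B.
Proof. intros HF a b c d.
 assert (Hd : forall t : Compactness.Tn 2 R, {e : posreal | forall x y,
     Rabs (x - fst t) < e -> Rabs (y - fst (snd t)) < e ->
     Rabs (F x y - F (fst t) (fst (snd t))) < 1}).
 { intros [t1 [t2 u]]. apply constructive_indefinite_description. simpl.
   assert (H := HF (t1, t2)). unfold continuous in H. rewrite filterlim_locally in H.
   destruct (H (mkposreal 1 Rlt_0_1)) as [e He]. exists e. intros x y Hx Hy.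
   apply (He (x, y)). split; simpl; auto. }
 apply NNPP. intro Hno.
 apply (compactness_list 2 (a, (c, tt)) (b, (d, tt)) (fun t => proj1_sig (Hd t))).
 intros [l Hl]. apply Hno.
 exists (fold_right (fun t acc => Rmax acc (Rabs (F (fst t) (fst (snd t))) + 1)) 0 l).
 intros x y Hx Hy.
 destruct (Hl (x, (y, tt))) as [t [Hin [_ Hcl]]]. { simpl. auto. }
 destruct t as [t1 [t2 u]]. simpl in Hcl. destruct Hcl as [H1 [H2 _]].
 assert (Hb := proj2_sig (Hd ((t1, (t2, u)) : Compactness.Tn 2 R)) x y H1 H2). simpl in Hb.
 assert (Hfold : forall (l0 : list (Compactness.Tn 2 R)) (t0 : Compactness.Tn 2 R), In t0 l0 -> Rabs (F (fst t0) (fst (snd t0))) + 1 <=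
     fold_right (fun t acc => Rmax acc (Rabs (F (fst t) (fst (snd t))) + 1)) 0 l0).
 { induction l0; simpl; intros t0 Hi. contradiction. destruct Hi as [<-|Hi].
   apply Rmax_r. eapply Rle_trans. apply IHl0; eauto. apply Rmax_l. }
 assert (Ht := Hfold l (t1, (t2, u)) Hin). simpl in Ht.
 assert (Rabs (F x y) <= Rabs (F t1 t2) + Rabs (F x y - F t1 t2)).
 { replace (F x y) with (F t1 t2 + (F x y - F t1 t2)) at 1 by ring. apply Rabs_triang. }
 lra. Qed.

Lemma lip_bound X Y J : 0 < X -> 0 < Y -> C1per X Y J ->
  exists L, 0 <= L /\
  (forall x y h, -X <= x <= X -> -Y <= y <= Y -> 0 <= h <= 2 * X -> Rabs (J (x + h) y - J x y) <= L * h) /\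
  (forall x y h, -X <= x <= X -> -Y <= y <= Y -> 0 <= h <= 2 * Y -> Rabs (J x (y + h) - J x y) <= L * h).
Proof. intros HX HY [Hper [Jx [Jy [HdX [HdY [HcX [HcY HcJ]]]]]]].
 destruct (bnd2 Jx HcX (-X) (3 * X) (-Y) Y) as [Bx HBx].
 destruct (bnd2 Jy HcY (-X) X (-Y) (3 * Y)) as [By HBy].
 exists (Rmax 0 (Rmax Bx By)). split. apply Rmax_l. split.
 - intros x y h Hx Hy Hh.
   destruct (MVT_gen (fun t => J t y) x (x + h) (fun t => Jx t y)) as [cc [Hc Heq]].
   + intros; apply HdX.
   + intros t _. apply continuity_pt_filterlim. apply (ex_derive_continuous (fun t : R => J t y)). exists (Jx t y); apply HdX.
   + rewrite Rmin_left in Hc by lra. rewrite Rmax_right in Hc by lra.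
     rewrite Heq. replace (x + h - x) with h by ring. rewrite Rabs_mult, (Rabs_pos_eq h) by lra.
     apply Rmult_le_compat_r. lra. eapply Rle_trans. apply HBx; lra.
     eapply Rle_trans. apply Rmax_l. apply Rmax_r.
 - intros x y h Hx Hy Hh.
   destruct (MVT_gen (fun t => J x t) y (y + h) (fun t => Jy x t)) as [cc [Hc Heq]].
   + intros; apply HdY.
   + intros t _. apply continuity_pt_filterlim. apply (ex_derive_continuous (fun t : R => J x t)). exists (Jy x t); apply HdY.
   + rewrite Rmin_left in Hc by lra. rewrite Rmax_right in Hc by lra.
     rewrite Heq. replace (y + h - y) with h by ring. rewrite Rabs_mult, (Rabs_pos_eq h) by lra.
     apply Rmult_le_compat_r. lra. eapply Rle_trans. apply HBy; lra.
     eapply Rle_trans. apply Rmax_r. apply Rmax_r. Qed.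



Lemma term_bound A B p q j K al : 0 <= A -> 0 <= B -> 0 <= p -> 0 <= q -> 0 <= j -> 0 < al ->
  A * j <= K -> B * j <= K ->
  (A * A + B * B) * q * (j * p) <= al * p ^ 2 + K * K / (2 * al) * ((A * q) ^ 2 + (B * q) ^ 2).
Proof. intros. 
 assert (H7 : (A * A + B * B) * q * (j * p) <= (A + B) * K * q * p).
 { assert (A * (A * j) <= A * K) by (apply Rmult_le_compat_l; auto).
   assert (B * (B * j) <= B * K) by (apply Rmult_le_compat_l; auto).
   assert (0 <= q * p) by nra. nra. }
 assert (H8 : (A + B) * K * q * p <= al * p ^ 2 + ((A + B) * K * q) ^ 2 / (4 * al)).
 { set (Q := (A + B) * K * q). 
   assert (0 <= (2 * al * p - Q) ^ 2) by (apply pow2_ge_0).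
   apply Rmult_le_reg_r with (4 * al). lra.
   replace ((al * p ^ 2 + Q ^ 2 / (4 * al)) * (4 * al)) with (4 * al * al * p ^ 2 + Q ^ 2) by (field; lra).
   nra. }
 assert (H9 : ((A + B) * K * q) ^ 2 / (4 * al) <= K * K / (2 * al) * ((A * q) ^ 2 + (B * q) ^ 2)).
 { replace (((A + B) * K * q) ^ 2 / (4 * al)) with (K * K / (2 * al) * ((A + B) ^ 2 * q ^ 2 / 2)) by (field; lra).
   apply Rmult_le_compat_l. apply Rdiv_le_0_compat. nra. lra.
   assert (0 <= (A - B) ^ 2 * q ^ 2) by (apply Rmult_le_pos; apply pow2_ge_0). nra. }
 lra. Qed.

Lemma Cmod_im a : Cmod (RtoC 0 + (0, a))%C = Rabs a.
Proof. unfold Cmod; simpl. rewrite <- sqrt_Rsqr_abs. f_equal. unfold Rsqr. ring. Qed.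
Lemma Cmod_im' a : Cmod (0, a) = Rabs a.
Proof. unfold Cmod; simpl. rewrite <- sqrt_Rsqr_abs. f_equal. unfold Rsqr. ring. Qed.

Lemma dft_transpose X Y N M u k l : dft X Y N M u k l = dft Y X M N (fun j i => u i j) l k.
Proof. unfold dft, sumS. rewrite sumZ_swap. apply sumZ_ext; intros; apply sumZ_ext; intros. ring. Qed.

Lemma node_range X N i : 0 < X -> (0 < N)%nat -> (1 <= i <= Z.of_nat N)%Z -> -X <= node X N i <= X.
Proof. intros HX HN Hi. assert (HNR : 0 < INR N) by (apply lt_0_INR; lia).
 unfold node, hstep. assert (1 <= IZR i <= INR N).
 { rewrite INR_IZR_INZ. split; apply IZR_le; lia. }
 split.
 - assert (0 <= IZR i * (2 * X / INR N)). apply Rmult_le_pos. lra. apply Rdiv_le_0_compat; lra. lra.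
 - assert (IZR i * (2 * X / INR N) <= 2 * X).
   { replace (2 * X) with (INR N * (2 * X / INR N)) at 2 by (field; lra).
     apply Rmult_le_compat_r. apply Rdiv_le_0_compat; lra. lra. }
   lra. Qed.

Lemma hstep_range X N : 0 < X -> (0 < N)%nat -> 0 <= hstep X N <= 2 * X.
Proof. intros HX HN. assert (HNR : 1 <= INR N) by (apply (le_INR 1); lia). unfold hstep. split.
 apply Rdiv_le_0_compat; lra.
 apply Rmult_le_reg_r with (INR N); [lra|]. unfold Rdiv. rewrite Rmult_assoc, Rinv_l by lra. nra. Qed.

Lemma inShat_bound N M k l : Nat.Even N -> Nat.Even M -> inShat N M k l ->
  (2 * Z.abs k <= Z.of_nat N)%Z /\ (2 * Z.abs l <= Z.of_nat M)%Z.
Proof. intros [a Ha] [b Hb] [Hk Hl]. subst. rewrite !Nat.div2_double in *. lia. Qed.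

Theorem lemma2p2 (X Y : R) (J : R -> R -> R) :
  0 < X -> 0 < Y -> C1per X Y J ->
  exists Cst : R, 0 < Cst /\
    forall (Nx Ny : nat), (0 < Nx)%nat -> Nat.Even Nx -> (0 < Ny)%nat -> Nat.Even Ny ->
    forall f g : gridR, periodic_grid Nx Ny f -> periodic_grid Nx Ny g ->
    forall alpha : R, 0 < alpha ->
      Cmod (ipN X Y Nx Ny (toC (convN X Y Nx Ny (grid_restr X Y Nx Ny J) f))
                (LapN X Y Nx Ny (toC g)))
      <= alpha * nrm2sq X Y Nx Ny (toC f) + Cst / alpha * grad_nrm2sq X Y Nx Ny g.
Proof.
 intros HX HY HC.
 destruct (lip_bound X Y J HX HY HC) as [L [HL0 [HLx HLy]]].
 set (K := 16 * X * Y * L).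
 assert (HK : 0 <= K) by (unfold K; assert (0 <= X * Y) by nra; nra).
 exists (K * K / 2 + 1). split. nra.
 intros N M HN HEN HM HEM f g Hf Hg al Hal.
 assert (HNM : INR N * INR M <> 0). { apply Rmult_integral_contrapositive; split; apply not_0_INR; lia. }
 assert (HNR : 0 < INR N) by (apply lt_0_INR; lia).
 assert (HMR : 0 < INR M) by (apply lt_0_INR; lia).
 destruct (hstep_range X N HX HN) as [Hhx0 Hhx1].
 destruct (hstep_range Y M HY HM) as [Hhy0 Hhy1].
 set (Jg := grid_restr X Y N M J).
 destruct HC as [HCper _].
 assert (HJ1 : forall i j, Jg (i + Z.of_nat N)%Z j = Jg i j).
 { intros. unfold Jg, grid_restr. rewrite node_per; auto. apply HCper. }
 assert (HJ2 : forall i j, Jg i (j + Z.of_nat M)%Z = Jg i j).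
 { intros. unfold Jg, grid_restr. rewrite node_per; auto. apply HCper. }
 assert (HLipx : forall i j, (1 <= i <= Z.of_nat N)%Z -> (1 <= j <= Z.of_nat M)%Z ->
            Rabs (Jg (i + 1)%Z j - Jg i j) <= L * hstep X N).
 { intros. unfold Jg, grid_restr.
   replace (node X N (i + 1)) with (node X N i + hstep X N) by (unfold node; rewrite plus_IZR; ring).
   apply HLx. apply node_range; auto. apply node_range; auto. lra. }
 assert (HLipy : forall j i, (1 <= j <= Z.of_nat M)%Z -> (1 <= i <= Z.of_nat N)%Z ->
            Rabs (Jg i (j + 1)%Z - Jg i j) <= L * hstep Y M).
 { intros. unfold Jg, grid_restr.
   replace (node Y M (j + 1)) with (node Y M j + hstep Y M) by (unfold node; rewrite plus_IZR; ring).
   apply HLy. apply node_range; auto. apply node_range; auto. lra. }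
 set (hh := hstep X N * hstep Y M).
 assert (Hhh : 0 <= hh) by (unfold hh; nra).
 set (Jh := dft X Y N M (toC Jg)).
 assert (HBx : forall k l, inShat N M k l -> Rabs (IZR k * PI / X) * (hh * Cmod (Jh k l)) <= K).
 { intros k l Hkl. destruct (inShat_bound N M k l HEN HEM Hkl).
   apply Jhat_bound; auto. }
 assert (HBy : forall k l, inShat N M k l -> Rabs (IZR l * PI / Y) * (hh * Cmod (Jh k l)) <= K).
 { intros k l Hkl. destruct (inShat_bound N M k l HEN HEM Hkl).
   unfold Jh. rewrite dft_transpose. unfold hh. rewrite (Rmult_comm (hstep X N)).
   replace K with (16 * Y * X * L) by (unfold K; ring).
   apply (Jhat_bound Y X M N (fun j i => Jg i j) L l k); auto. }
 set (v := toC g). set (vh := dft X Y N M v). set (fh := dft X Y N M (toC f)).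
 set (mx := fun (k l : Z) => ((0, IZR k * PI / X) : C)).
 set (my := fun (k l : Z) => ((0, IZR l * PI / Y) : C)).
 set (c := fun k l => Cmult (Cplus (Cmult (mx k l) (mx k l)) (Cmult (my k l) (my k l))) (vh k l)).
 set (U := toC (convN X Y N M Jg f)).
 assert (Hip : ipN X Y N M U (LapN X Y N M v) =
   ipN X Y N M U (fun i j => Cmult (RtoC (/ (INR N * INR M))) (sumShat N M (fun k l => Cmult (c k l) (Cmult (EX X N k i) (EX Y M l j)))))).
 { unfold ipN. f_equal. apply sumS_ext; intros i j. f_equal. f_equal.
   unfold LapN, DxN, DyN. rewrite !spec_spec; auto.
   rewrite <- Cmult_plus_distr_l, <- sumShat_plus. f_equal. apply sumShat_ext'; intros. unfold c, vh, mx, my. ring. }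
 rewrite Hip, ip_rep; auto.
 assert (Hr : 0 <= hh * / (INR N * INR M)).
 { apply Rmult_le_pos; auto. left; apply Rinv_0_lt_compat; nra. }
 rewrite Cmod_mult, Cmod_R, Rabs_pos_eq by auto. fold hh.
 eapply Rle_trans. apply Rmult_le_compat_l. auto. apply Cmod_sumShat.
 eapply Rle_trans. apply Rmult_le_compat_l. auto.
 apply (sumShatR_le N M _ (fun k l => al * Cmod (fh k l) ^ 2 + K * K / (2 * al) *
     (Cmod (Cmult (mx k l) (vh k l)) ^ 2 + Cmod (Cmult (my k l) (vh k l)) ^ 2))).
 { intros k l Hkl. rewrite Cmod_mult.

   set (A := Rabs (IZR k * PI / X)). set (B := Rabs (IZR l * PI / Y)).
   assert (Hc : Cmod (Cconj (c k l)) = (A * A + B * B) * Cmod (vh k l)).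
   { rewrite Cmod_conj. unfold c. rewrite Cmod_mult. f_equal.
     replace (Cplus (Cmult (mx k l) (mx k l)) (Cmult (my k l) (my k l))) with
       (RtoC (- ((IZR k * PI / X) * (IZR k * PI / X) + (IZR l * PI / Y) * (IZR l * PI / Y)))).
     rewrite Cmod_R, Rabs_Ropp, Rabs_pos_eq. unfold A, B. rewrite <- !Rabs_mult, !Rabs_pos_eq; auto.
     apply Rle_0_sqr. apply Rle_0_sqr. nra.
     unfold mx, my, RtoC, Cmult, Cplus; simpl. f_equal; ring. }
   assert (Hu : Cmod (dft X Y N M U k l) = hh * Cmod (Jh k l) * Cmod (fh k l)).
   { unfold U. rewrite conv_thm; auto. rewrite !Cmod_mult, !Cmod_cis, Cmod_R, Rabs_pos_eq by auto.
     unfold Jh, fh. fold hh. ring. }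
   rewrite Hc, Hu.
   replace (Cmod (Cmult (mx k l) (vh k l))) with (A * Cmod (vh k l)) by (rewrite Cmod_mult; unfold mx; rewrite Cmod_im'; auto).
   replace (Cmod (Cmult (my k l) (vh k l))) with (B * Cmod (vh k l)) by (rewrite Cmod_mult; unfold my; rewrite Cmod_im'; auto).
   apply term_bound; try apply Rabs_pos; try apply Cmod_ge_0; auto.
   apply Rmult_le_pos; auto; apply Cmod_ge_0.
   apply HBx; auto.
   apply HBy; auto. }
 assert (E1 := nrm_f X Y N M HX HY HN HM (toC f)).
 assert (E2 := nrm_spec X Y N M HX HY HN HM mx v).
 assert (E3 := nrm_spec X Y N M HX HY HN HM my v).
 fold hh in E1, E2, E3.
 rewrite sumShatR_plus, !sumShatR_scal, sumShatR_plus.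
 match goal with |- ?r * (?a * ?s1 + ?b * (?s2 + ?s3)) <= _ =>
   replace (r * (a * s1 + b * (s2 + s3))) with (a * (r * s1) + b * (r * s2 + r * s3)) by ring end.
 fold fh in E1. fold vh in E2, E3. rewrite E1, E2, E3.
 unfold grad_nrm2sq. fold v. 
 assert (Hn : forall u, 0 <= nrm2sq X Y N M u).
 { intros u. unfold nrm2sq. apply Rmult_le_pos. nra. unfold sumSR. apply sumZR_nonneg; intros.
   apply sumZR_nonneg; intros. apply pow2_ge_0. }
 assert (Ha := Hn (DxN X Y N M v)). assert (Hb := Hn (DyN X Y N M v)).
 unfold DxN, DyN in *.
 apply Rplus_le_compat_l. unfold mx, my.
 apply Rmult_le_compat_r. lra.
 replace (K * K / (2 * al)) with ((K * K / 2) * / al) by (field; lra).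
 unfold Rdiv at 2. apply Rmult_le_compat_r. left; apply Rinv_0_lt_compat; auto. lra. Qed.
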